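(* Let $X\subset\mathbb{R}^N$ and $Y\subset\mathbb{R}^M$ be nondegenerate closed sets and $f:X\to Y$ a homeomorphism. If $p$ is a local cut-point of $X$, then $f(p)$ is a local cut-point of $Y$.
   Context: For a closed set $X\subset\mathbb{R}^N$, $x_0\in X$ and $r>0$, let $C_X(x_0,r)$ denote the connected component of $\overline{B}(x_0,r)\cap X$ containing $x_0$. A point $x_0\in X$ is a local cut-point of $X$ if there exists $r>0$ such that $C_X(x_0,r)\setminus\{x_0\}$ is not connected. *)

(* Defs.v *)
(* R^N is modelled as 'rV[R]_N (product topology =
   Euclidean topology); balls are the closed Euclidean balls, written out. *)
From HB Require Import structures.
From mathcomp Require Import all_boot all_order all_algebra.
From mathcomp Require Import all_classical all_reals all_analysis.
Set Implicit Arguments. Unset Strict Implicit. Unset Printing Implicit Defensive.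
Import Order.TTheory GRing.Theory Num.Theory.
Import numFieldNormedType.Exports.
Local Open Scope classical_set_scope.
Local Open Scope ring_scope.

Definition cball_eucl {R : realType} {N : nat} (x0 : 'rV[R]_N) (r : R)
  : set 'rV[R]_N :=
  [set y | Num.sqrt (\sum_(i < N) (y ord0 i - x0 ord0 i) ^+ 2) <= r].

Definition CX {R : realType} {N : nat} (X : set 'rV[R]_N) (x0 : 'rV[R]_N)
  (r : R) : set 'rV[R]_N :=
  connected_component (cball_eucl x0 r `&` X) x0.

Definition local_cut_point {R : realType} {N : nat} (X : set 'rV[R]_N)
  (x0 : 'rV[R]_N) : Prop :=
  X x0 /\ exists r : R, 0 < r /\ ~ connected (CX X x0 r `\ x0).

Definition nondegenerate_set {T : Type} (X : set T) : Prop :=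
  exists x y, X x /\ X y /\ x <> y.

(* f : X -> Y is a homeomorphism (f given as a map on the ambient space,
   only its restriction to X matters). *)
Definition homeomorphism_on {T U : topologicalType} (X : set T) (Y : set U)
  (f : T -> U) : Prop :=
  [/\ f @` X = Y, {within X, continuous f} &
      exists g : U -> T,
        [/\ g @` Y `<=` X, {within Y, continuous g},
            {in X, cancel f g} & {in Y, cancel g f}]].

(* Main.v *)
Require Import Defs.
From mathcomp Require Import all_boot all_order all_algebra.
From mathcomp Require Import all_classical all_reals all_analysis.
Import Order.TTheory GRing.Theory Num.Theory.
Import numFieldNormedType.Exports.
Local Open Scope classical_set_scope.
Local Open Scope ring_scope.
Set Implicit Arguments. Unset Strict Implicit.

Section Abstract.
Context {T : topologicalType}.

Definition clopenIn (F W : set T) :=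
  [/\ W `<=` F, (exists2 O, open O & W = F `&` O) & (exists2 C, closed C & W = F `&` C)].

Lemma clopenInT F : clopenIn F F.
Proof.
split => //; [exists setT; [exact: openT | by rewrite setIT]
  | exists setT; [exact: closedT | by rewrite setIT]].
Qed.

Lemma clopenInI F W1 W2 : clopenIn F W1 -> clopenIn F W2 -> clopenIn F (W1 `&` W2).
Proof.
move=> [s1 [U1 o1 e1] [K1 c1 f1]] [s2 [U2 o2 e2] [K2 c2 f2]]; split.
- by move=> x [/s1].
- exists (U1 `&` U2); first exact: openI.
  by rewrite {1}e1 {1}e2 setIACA setIid.
- exists (K1 `&` K2); first exact: closedI.
  by rewrite {1}f1 {1}f2 setIACA setIid.
Qed.

Lemma sep_clopen (F S : set T) (q : T) : compact S -> S `<=` F -> F q ->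
  (forall y, S y -> exists W, [/\ clopenIn F W, W q & ~ W y]) ->
  exists W, [/\ clopenIn F W, W q & W `&` S = set0].
Proof.
move=> cS SF Fq Hy; apply: contrapT => H.
have H' : forall W, clopenIn F W -> W q -> W `&` S !=set0.
  move=> W cW Wq; apply/set0P/negP => /eqP WS; apply: H; by exists W.
set D := [set W | clopenIn F W /\ W q].
have FG : Filter (filter_from D (fun W => W `&` S)).
  apply: filter_from_filter; first by exists F; split; [exact: clopenInT|].
  move=> W1 W2 [c1 q1] [c2 q2]; exists (W1 `&` W2).
    by split; [exact: clopenInI|].
  by move=> x [[? ?] ?]; split; split.
have PG : ProperFilter (filter_from D (fun W => W `&` S)).
  by apply: filter_from_proper => W [cW Wq]; exact: H'.
have GS : filter_from D (fun W => W `&` S) S.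
  by exists F; [split; [exact: clopenInT|] | move=> x []].
have [y [Sy cly]] := cS _ PG GS.
have [W [cW Wq nWy]] := Hy y Sy.
have [_ _ [C cC eC]] := cW.
have nCy : ~ C y by move=> Cy; apply: nWy; rewrite eC; split => //; exact: SF.
have GW : filter_from D (fun W => W `&` S) (W `&` S).
  by exists W => //; split.
have NC : nbhs y (~` C) by apply: open_nbhs_nbhs; split => //; exact: closed_openC.
have [x [[Wx Sx] nCx]] := cly _ _ GW NC.
by apply: nCx; move: Wx; rewrite eC => -[].
Qed.

Definition quasi (F : set T) (q : T) := [set x | forall W, clopenIn F W -> W q -> W x].

Lemma quasi_sub F q : F q -> quasi F q `<=` F.
Proof. by move=> Fq x /(_ F (clopenInT F)); apply. Qed.

Lemma quasi_refl F q : quasi F q q.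
Proof. by move=> W _. Qed.

Lemma quasi_closed F q : closed F -> closed (quasi F q).
Proof.
move=> cF.
have -> : quasi F q = \bigcap_(W in [set W | clopenIn F W /\ W q]) W.
  by apply/seteqP; split=> x Hx W => [[cW Wq]|cW Wq]; [exact: Hx | exact: (Hx W)].
apply: closed_bigI => W [[_ _ [C cC ->]] _]; exact: closedI.
Qed.

Hypothesis hT : hausdorff_space T.
Hypothesis Hsep : forall A B : set T, closed A -> closed B -> A `&` B = set0 ->
  exists U V, [/\ open U, open V, A `<=` U, B `<=` V & U `&` V = set0].

Lemma quasi_key (F : set T) q : compact F -> F q ->
  forall A1 A2, closed A1 -> closed A2 -> A1 `&` A2 = set0 ->
  quasi F q = A1 `|` A2 -> A1 q -> A2 = set0.
Proof.
move=> cF Fq A1 A2 c1 c2 d12 eQ A1q.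
have [U [V [oU oV AU BV UV]]] := Hsep c1 c2 d12.
have cS : compact (F `&` ~` (U `|` V)).
  exact: compact_closedI cF (open_closedC (openU oU oV)).
have HY : forall y, (F `&` ~` (U `|` V)) y -> exists W, [/\ clopenIn F W, W q & ~ W y].
  move=> y [Fy nUVy]; apply: contrapT => Hn.
  have Qy : quasi F q y.
    move=> W' cW' W'q; apply: contrapT => nW'y; apply: Hn; by exists W'.
  have : (A1 `|` A2) y by rewrite -eQ.
  by case=> [/AU|/BV] ?; apply: nUVy; [left|right].
have [W [cW Wq WS]] := sep_clopen cS (fun x => @proj1 _ _) Fq HY.
have [WF [Uo oO eO] [Kc cC eC]] := cW.
have cW2 : clopenIn F (W `&` U).
  split.
  - by move=> x [/WF].
  - exists (Uo `&` U); first exact: openI.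
    by rewrite {1}eO setIA.
  - exists (Kc `&` ~` V); first exact: closedI cC (open_closedC oV).
    apply/seteqP; split => x.
      move=> [Wx Ux]; have := Wx; rewrite {1}eC => -[Fx Cx]; split=> //; split=> // Vx.
      by have : (U `&` V) x by []; rewrite UV.
    move=> [Fx [Cx nVx]]; have Wx : W x by rewrite eC.
    split=> //; apply: contrapT => nUx.
    have : (W `&` (F `&` ~` (U `|` V))) x by split=> //; split=> //; case.
    by rewrite WS.
have Q_U : quasi F q `<=` U.
  by move=> x Qx; have [] := Qx _ cW2 (conj Wq (AU _ A1q)).
apply/seteqP; split=> x // A2x.
have : (U `&` V) x by split; [apply: Q_U; rewrite eQ; right | exact: BV].
by rewrite UV.
Qed.

Lemma quasi_connected (F : set T) q : compact F -> F q -> connected (quasi F q).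
Proof.
move=> cF Fq B B0 [Uo oO eO] [Kc cC eC].
have cQ : closed (quasi F q) by apply: quasi_closed; exact: compact_closed.
have c1 : closed B by rewrite eC; exact: closedI.
have c2 : closed (quasi F q `&` ~` Uo) by apply: closedI => //; exact: open_closedC.
have d12 : B `&` (quasi F q `&` ~` Uo) = set0.
  by apply/seteqP; split=> x // [Bx [_ nOx]]; move: Bx; rewrite eO => -[].
have eU : quasi F q = B `|` (quasi F q `&` ~` Uo).
  apply/seteqP; split=> x.
    move=> Qx; have [Ox|nOx] := pselect (Uo x); [left; rewrite eO | right] => //.
  by case=> [|[]//]; rewrite eO => -[].
have [Bq|nBq] := pselect (B q).
  have E0 := quasi_key cF Fq c1 c2 d12 eU Bq.
  apply/seteqP; split=> x; first by rewrite eO => -[].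
  move=> Qx; have [Ox|nOx] := pselect (Uo x); first by rewrite eO.
  by have : (quasi F q `&` ~` Uo) x by []; rewrite E0.
have Aq : (quasi F q `&` ~` Uo) q.
  split; first exact: quasi_refl.
  by move=> Oq; apply: nBq; rewrite eO; split=> //; exact: quasi_refl.
have := quasi_key cF Fq c2 c1 _ _ Aq.
rewrite setIC d12 setUC -eU => /(_ erefl erefl) B0'.
by move: B0; rewrite B0' => -[].
Qed.


Lemma half (C E0 E1 : set T) p : connected C -> closed C -> C p ->
  C `\ p = E0 `|` E1 -> separated E0 E1 -> E1 !=set0 ->
  connected (E0 `|` [set p]) /\ closed (E0 `|` [set p]).
Proof.
move=> conC cC Cp eC sE [e1 E1e1].
have E0C : E0 `<=` C.
  by move=> x E0x; have [] : (C `\ p) x by rewrite eC; left.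
have E1C : E1 `<=` C.
  by move=> x E1x; have [] : (C `\ p) x by rewrite eC; right.
have d01 := separated_disjoint sE.
have [cl01 cl10] := sE.
split.
- apply/connectedP => G [G0 eG sG].
  wlog Gp : G G0 eG sG / G false p.
    move=> W; have : (E0 `|` [set p]) p by right.
    rewrite eG => -[Gf|Gt]; first exact: W.
    by apply: (W (G \o negb)) => //; [case => /=|rewrite eG setUC|rewrite separatedC].
  have dG := separated_disjoint sG.
  have [sG1 sG2] := sG.
  have GtE0 : G true `<=` E0.
    move=> x Gtx; have : (E0 `|` [set p]) x by rewrite eG; right.
    case=> // xp; rewrite xp in Gtx.
    by have : (G false `&` G true) p by []; rewrite dG.
  have sep' : separated (G false `|` E1) (G true).
    split.
      rewrite closureU; apply/seteqP; split=> x // [[Hx|Hx] Hy].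
        by have : (closure (G false) `&` G true) x by []; rewrite sG1.
      have : (E0 `&` closure E1) x by split; [exact: GtE0|].
      by rewrite cl10.
    apply/seteqP; split=> x // [[Hx|Hx] Hy].
      by have : (G false `&` closure (G true)) x by []; rewrite sG2.
    have : (closure E0 `&` E1) x by split; [exact: (closureS GtE0)|].
    by rewrite cl01.
  have CU : C `<=` (G false `|` E1) `|` G true.
    move=> x Cx; have [->|xp] := pselect (x = p); first by left; left.
    have : (E0 `|` E1) x by rewrite -eC; split.
    case=> [E0x|E1x]; last by left; right.
    have : (E0 `|` [set p]) x by left.
    by rewrite eG => -[]; [left; left | right].
  have [H|H] := connected_subset sep' CU conC.
    have [t Gt] := G0 true; have Ct : C t by exact/E0C/GtE0.
    case: (H t Ct) => [Gf|E1t].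
      by have : (G false `&` G true) t by []; rewrite dG.
    have : (E0 `&` E1) t by split; [exact: GtE0|].
    by rewrite d01.
  have := H e1 (E1C _ E1e1) => /GtE0 E0e1.
  by have : (E0 `&` E1) e1 by []; rewrite d01.
- move=> x; rewrite closureU => -[clx|clp].
    have Cx : C x by apply: cC; exact: (closureS E0C).
    have [->|xp] := pselect (x = p); first by right.
    have : (E0 `|` E1) x by rewrite -eC; split.
    case=> [E0x|E1x]; first by left.
    by have : (closure E0 `&` E1) x by []; rewrite cl01.
  right; exact: (accessible_closed_set1 (hausdorff_accessible hT) clp).
Qed.

Lemma bump (K E W0 : set T) q : compact K -> connected K -> K q -> closed E ->
  open W0 -> W0 q -> W0 `<=` E -> (exists2 x, K x & x <> q) ->
  exists Z, [/\ connected Z, Z `<=` K `&` E, Z q & exists2 z, Z z & z <> q].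
Proof.
move=> cK conK Kq cE oW W0q W0E [x0 Kx0 x0q].
have [KW|KW] := pselect (K `<=` W0).
  exists K; split => //; last by exists x0.
  by move=> x Kx; split => //; exact/W0E/KW.
have cF : compact (K `&` E) by exact: compact_closedI.
have Fq : (K `&` E) q by split => //; exact: W0E.
exists (quasi (K `&` E) q); split.
- exact: quasi_connected.
- exact: quasi_sub.
- exact: quasi_refl.
apply: contrapT => Hn.
have cS : compact ((K `&` E) `&` ~` W0).
  exact: compact_closedI cF (open_closedC oW).
have HY : forall y, ((K `&` E) `&` ~` W0) y -> exists W, [/\ clopenIn (K `&` E) W, W q & ~ W y].
  move=> y [Fy nWy]; apply: contrapT => H2; apply: Hn; exists y.
    move=> W' cW' W'q; apply: contrapT => n; apply: H2; by exists W'.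
  by move=> yq; apply: nWy; rewrite yq.
have [W [cW Wq WS]] := sep_clopen cS (fun x => @proj1 _ _) Fq HY.
have [WF [Uo oO eO] [Kc cC eC]] := cW.
have WW0 : W `<=` W0.
  move=> x Wx; apply: contrapT => nx.
  have : (W `&` ((K `&` E) `&` ~` W0)) x by split=> //; split=> //; exact: WF.
  by rewrite WS.
have WK : W = K.
  apply: conK.
  - by exists q.
  - exists (Uo `&` W0); first exact: openI.
    apply/seteqP; split=> x.
      move=> Wx; have := Wx; rewrite {1}eO => -[[Kx _] Ux]; split=> //; split=> //.
      exact: WW0.
    move=> [Kx [Ux Wx]]; rewrite eO; split=> //; split=> //; exact: W0E.
  - exists (E `&` Kc); first exact: closedI.
    by rewrite setIA.
by apply: KW => x Kx; apply: WW0; rewrite WK.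
Qed.

End Abstract.

Section Concrete.
Variable R : realType.

Definition de {N} (x y : 'rV[R]_N) : R :=
  Num.sqrt (\sum_(i < N) (y ord0 i - x ord0 i) ^+ 2).

Lemma de_coord N (x y : 'rV[R]_N) i : `|y ord0 i - x ord0 i| <= de x y.
Proof.
rewrite /de -sqrtr_sqr; apply: ler_wsqrtr.
rewrite (bigD1 i) //= lerDl; apply: sumr_ge0 => j _; exact: sqr_ge0.
Qed.

Lemma de_self N (x : 'rV[R]_N) : de x x = 0.
Proof. by rewrite /de big1 ?sqrtr0 // => i _; rewrite subrr expr2 mul0r. Qed.

Lemma de_cont N (x : 'rV[R]_N) : continuous (de x).
Proof.
move=> y; apply: (@continuous_comp _ _ _
  (fun y : 'rV[R]_N => \sum_(i < N) (y ord0 i - x ord0 i) ^+ 2) Num.sqrt);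
  last exact: sqrt_continuous.
apply: (continuous_big (op := +%R)); first exact: add_continuous.
move=> i _ z; apply: (@continuous_comp _ _ _
  (fun y : 'rV[R]_N => y ord0 i - x ord0 i) (fun t : R => t ^+ 2));
  last exact: exprn_continuous.
apply: (@cvgB _ _ _ (nbhs z)); last exact: cvg_cst.
exact: (@coord_continuous R 1 N ord0 i z).
Qed.

Lemma de_small N (x : 'rV[R]_N) (P : set 'rV[R]_N) : nbhs x P ->
  exists2 s, 0 < s & forall y, de x y <= s -> P y.
Proof.
move=> /nbhs_ballP [e /= e0 He]; exists (e / 2); first by rewrite divr_gt0.
move=> y dy; apply: He; rewrite mx_norm_ball /ball_ /=.
apply: (@le_lt_trans _ _ (e / 2)); last by rewrite ltr_pdivrMr // ltr_pMr // ltr1n.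
have -> : `|x - y| = mx_norm (x - y) by [].
rewrite mx_normrE; apply: bigmax_le; first exact: ltW (divr_gt0 _ _).
move=> [a b] _ /=; rewrite !mxE (ord1 a) distrC; exact: le_trans (de_coord _ _ _) dy.
Qed.

Lemma cball_closed N (x : 'rV[R]_N) r : closed (cball_eucl x r).
Proof.
have -> : cball_eucl x r = de x @^-1` [set t | t <= r] by [].
apply: preimage_closed; last exact: closed_le.
move=> y _; exact: de_cont.
Qed.

Lemma oball_open N (x : 'rV[R]_N) s : open [set y | de x y < s].
Proof.
have -> : [set y | de x y < s] = de x @^-1` [set t | t < s] by [].
apply: open_comp; last exact: open_lt.
move=> y _; exact: de_cont.
Qed.

Lemma cball_compact N (x : 'rV[R]_N) r : compact (cball_eucl x r).
Proof.
have Hbox : compact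
  [set v : 'rV[R]_N | forall i, (`[x ord0 i - r, x ord0 i + r]%classic) (v ord0 i)].
  apply: (@rV_compact _ _ (fun i => `[x ord0 i - r, x ord0 i + r]%classic)).
  by move=> i; exact: segment_compact.
have Hsub : cball_eucl x r `<=`
  [set v : 'rV[R]_N | forall i, (`[x ord0 i - r, x ord0 i + r]%classic) (v ord0 i)].
  move=> y dy i /=; rewrite in_itv /= -ler_distlC distrC.
  exact: le_trans (de_coord _ _ _) dy.
exact: (subclosed_compact (@cball_closed N x r) Hbox Hsub).
Qed.

Lemma rV_hausdorff N : hausdorff_space 'rV[R]_N.
Proof. exact: norm_hausdorff. Qed.

Lemma rV_sep N : forall A B : set 'rV[R]_N, closed A -> closed B -> A `&` B = set0 ->
  exists U V, [/\ open U, open V, A `<=` U, B `<=` V & U `&` V = set0].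
Proof. exact: (iffLR (@normal_openP R _) (@pseudometric_normal R _)). Qed.

End Concrete.

Unset Implicit Arguments.

Theorem lemma2p7 (R : realType) (N M : nat)
  (X : set 'rV[R]_N) (Y : set 'rV[R]_M) (f : 'rV[R]_N -> 'rV[R]_M)
  (p : 'rV[R]_N) :
  closed X -> closed Y -> nondegenerate_set X -> nondegenerate_set Y ->
  homeomorphism_on X Y f ->
  local_cut_point X p -> local_cut_point Y (f p).
Proof.
move=> cX cY _ _ [fXY fc [g [gYX gc fgK gfK]]] [Xp [r [r0 ncon]]].
have hN := @rV_hausdorff R N; have hM := @rV_hausdorff R M.
have sM := @rV_sep R M.
set q := f p.
have Yq : Y q by rewrite -fXY; exists p.
have gq : g q = p by exact: fgK (mem_set Xp).
have finj : forall x y, X x -> X y -> f x = f y -> x = y.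
  move=> x y Xx Xy e.
  by rewrite -[x](fgK x (mem_set Xx)) -[y](fgK y (mem_set Xy)) e.
set C := CX X p r.
have CXsub : C `<=` cball_eucl p r `&` X by exact: connected_component_sub.
have Cp : C p.
  apply: connected_component_refl; split => //.
  by change (de p p <= r); rewrite de_self; exact: ltW.
have Ccl : closed C.
  by apply: component_closed; apply: closedI; [exact: cball_closed | exact: cX].
have Ccomp : compact C.
  exact: (subclosed_compact Ccl (@cball_compact R N p r) (fun x Cx => (CXsub x Cx).1)).
have Ccon : connected C by exact: component_connected.
move/connectedPn: ncon => [E [E0 eE sE]].
have [s s0 Hs] : exists2 s, 0 < s & forall y, Y y -> de q y <= s -> de p (g y) < r.
  have gc2 := gc; move/subspace_continuousP: gc2 => /(_ q Yq) Hc.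
  have {}Hc : g x @[x --> within Y (nbhs q)] --> p by rewrite -gq; exact: Hc.
  have nb : nbhs p [set z | de p z < r].
    by apply: open_nbhs_nbhs; split; [exact: oball_open | rewrite /= de_self].
  have H := Hc _ nb.
  have [s s0 Hs'] := de_small H.
  by exists s => // y Yy dy; exact: Hs' y dy Yy.
set CY := CX Y q s.
have CYY : CY `<=` cball_eucl q s `&` Y by exact: connected_component_sub.
have key : forall A, connected (A `|` [set p]) -> closed (A `|` [set p]) ->
    A `<=` C -> A !=set0 -> ~ A p -> exists2 x, A x & CY (f x).
  move=> A Acon Acl AC [a Aa] nAp.
  have AX : A `|` [set p] `<=` X by move=> x [/AC/CXsub []|->].
  have Acomp : compact (A `|` [set p]).
    by apply: (subclosed_compact Acl Ccomp) => x [/AC|->].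
  have fcA : {within A `|` [set p], continuous f} by exact: continuous_subspaceW AX fc.
  have Kq : (f @` (A `|` [set p])) q by exists p => //; right.
  have W0q : [set y | de q y < s] q by rewrite /= de_self.
  have W0E : [set y | de q y < s] `<=` cball_eucl q s by move=> y /ltW.
  have Kx : exists2 x, (f @` (A `|` [set p])) x & x <> q.
    exists (f a); first by exists a => //; left.
    move=> e; apply: nAp; have := finj a p (AX a (or_introl Aa)) Xp e.
    by move=> <-.
  have [Z [Zcon ZKE Zq [z Zz zq]]] := bump hM sM (continuous_compact fcA Acomp)
    (connected_continuous_connected Acon fcA) Kq (@cball_closed R M q s)
    (@oball_open R M q s) W0q W0E Kx.
  have [[x Ax fxz] _] := ZKE z Zz.
  case: Ax => [Ax|xp]; last by exfalso; apply: zq; rewrite -fxz xp.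
  exists x => //; rewrite fxz.
  have Zsub : Z `<=` cball_eucl q s `&` Y.
    move=> y /ZKE [[x' Ax' <-] By]; split => //; rewrite -fXY; exists x' => //.
    exact: AX.
  exact: (connected_component_max Zq Zsub Zcon) z Zz.
have E0C : E false `<=` C.
  by move=> x Ex; have [] : (C `\ p) x by rewrite eE; left.
have E1C : E true `<=` C.
  by move=> x Ex; have [] : (C `\ p) x by rewrite eE; right.
have nE0p : ~ E false p.
  move=> Ep; have [_ H] : (C `\ p) p by rewrite eE; left.
  exact: H.
have nE1p : ~ E true p.
  move=> Ep; have [_ H] : (C `\ p) p by rewrite eE; right.
  exact: H.
have [con0 cl0] := half hN Ccon Ccl Cp eE sE (E0 true).
have eE' : C `\ p = E true `|` E false by rewrite eE setUC.
have sE' : separated (E true) (E false) by rewrite separatedC.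
have [con1 cl1] := half hN Ccon Ccl Cp eE' sE' (E0 false).
have [x0 Ex0 Cx0] := key (E false) con0 cl0 E0C (E0 false) nE0p.
have [x1 Ex1 Cx1] := key (E true) con1 cl1 E1C (E0 true) nE1p.
split; first exact: Yq.
exists s; split => // Hcon.
have CYsubY : CY `<=` Y by move=> y /CYY [].
have gcC : g @` CY `<=` C.
  apply: connected_component_max.
  - exists q => //; apply: connected_component_refl; split => //.
    by change (de q q <= s); rewrite de_self; exact: ltW.
  - move=> _ [y CYy <-]; have [By Yy] := CYY y CYy; split.
      by change (de p (g y) <= r); exact: ltW (Hs y Yy By).
    by apply: gYX; exists y.
  - apply: connected_continuous_connected; first exact: component_connected.
    exact: continuous_subspaceW CYsubY gc.
have Zcon : connected (g @` (CY `\ q)).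
  apply: connected_continuous_connected Hcon _.
  by apply: continuous_subspaceW gc => y [/CYsubY].
have Zsub : g @` (CY `\ q) `<=` E false `|` E true.
  move=> _ [y [CYy yq] <-]; rewrite -eE; split; first by apply: gcC; exists y.
  move=> gyp; apply: yq; have Yy := CYsubY y CYy.
  by rewrite -(gfK y (mem_set Yy)) gyp.
have fx_in : forall b x, E b x -> CY (f x) -> (g @` (CY `\ q)) x.
  move=> b x Ex CYx; exists (f x); last first.
    apply: fgK; apply: mem_set; case: b Ex => Ex; [exact: (CXsub _ (E1C _ Ex)).2 | exact: (CXsub _ (E0C _ Ex)).2].
  split => // fxq; have Xx : X x by case: b Ex => Ex; [exact: (CXsub _ (E1C _ Ex)).2 | exact: (CXsub _ (E0C _ Ex)).2].
  have xp := finj x p Xx Xp fxq.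
  by case: b Ex => Ex; [apply: nE1p | apply: nE0p]; rewrite -xp.
have dE := separated_disjoint sE.
have [H|H] := connected_subset sE Zsub Zcon.
  have := H x1 (fx_in true x1 Ex1 Cx1) => Ex1'.
  by have : (E false `&` E true) x1 by []; rewrite dE.
have := H x0 (fx_in false x0 Ex0 Cx0) => Ex0'.
by have : (E false `&` E true) x0 by []; rewrite dE.
Qed.
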